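(* Let $\Gamma$ be a finitely generated non-abelian free group and $\rho:\Gamma\to\mathrm{SL}_3(\mathbb{R})$ a reducible suspension preserving the hyperplane $P$. If $\rho$ is quasi-isometric, then for every $\gamma\in\Gamma\setminus\{1\}$ the element $\rho_P(\gamma)$ is hyperbolic, i.e. its two eigenvalues are real with distinct moduli.
   Context: A reducible suspension is a representation $\rho:\Gamma\to\mathrm{SL}_3(\mathbb{R})$ preserving a 2-dimensional subspace $P$; $\rho_P(\gamma):=|\det_P(\rho(\gamma))|^{-1/2}\rho(\gamma)|_P\in\mathrm{SL}^{\pm}(P)$, with $P$ given the volume form inherited from $\mathbb{R}^3$. $\rho$ is quasi-isometric if there are $a\ge1,b\ge0$ with $\log\|\rho(\gamma)\|\ge a^{-1}|\gamma|-b$ for all $\gamma$, where $|\cdot|$ is word length for a fixed finite symmetric generating set (equivalently, $\rho$ is a quasi-isometric embedding). *)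

(* Defs.v *)
From HB Require Import structures.
From mathcomp Require Import all_boot all_order all_algebra.
From mathcomp Require Import reals exp.
Set Implicit Arguments. Unset Strict Implicit. Unset Printing Implicit Defensive.
Import Order.TTheory GRing.Theory Num.Theory.
Local Open Scope ring_scope.

(* Elements of the free group F_k on the basis a_0,...,a_{k-1}: reduced words.
   A letter (i, true) is a_i, (i, false) is a_i^{-1}. *)
Definition letter (k : nat) := ('I_k * bool)%type.
Definition word (k : nat) := seq (letter k).

Definition reduced (k : nat) (w : word k) : bool :=
  sorted (fun x y : letter k => ~~ ((x.1 == y.1) && (x.2 != y.2))) w.

(* word length w.r.t. the symmetric generating set {a_i^{+-1}}: for a reduced
   word it is its size *)
Definition wlen (k : nat) (w : word k) : nat := size w.

Definition letter_mx (R : fieldType) (k : nat) (g : 'I_k -> 'M[R]_3)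
  (x : letter k) : 'M[R]_3 := if x.2 then g x.1 else invmx (g x.1).

Definition rep (R : fieldType) (k : nat) (g : 'I_k -> 'M[R]_3) (w : word k)
  : 'M[R]_3 := \prod_(x <- w) letter_mx g x.

Definition mxnorm (R : realFieldType) (A : 'M[R]_3) : R :=
  \big[Num.max/0]_(i < 3) \big[Num.max/0]_(j < 3) `|A i j|.

(* rho_P for a restriction matrix M of rho(gamma) to P (in some basis of P):
   |det_P|^{-1/2} rho(gamma)|_P *)
Definition normalize_P (R : rcfType) (M : 'M[R]_2) : 'M[R]_2 :=
  (Num.sqrt `|\det M|)^-1 *: M.

Definition hyperbolic (R : realFieldType) (N : 'M[R]_2) : Prop :=
  exists l1 l2 : R, `|l1| != `|l2| /\
    char_poly N = ('X - l1%:P) * ('X - l2%:P).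

(* Main.v *)
Require Import Defs.
From HB Require Import structures.
From mathcomp Require Import all_boot all_order all_algebra.
From mathcomp Require Import reals exp.
From mathcomp Require Import ring lra zify.
Import Order.TTheory GRing.Theory Num.Theory.
Local Open Scope ring_scope.
Set Implicit Arguments. Unset Strict Implicit.

Section TwoByTwo.
Variable R : comNzRingType.

Lemma det2 (A : 'M[R]_2) : \det A = A 0 0 * A 1 1 - A 0 1 * A 1 0.
Proof.
rewrite (expand_det_row _ 0) !big_ord_recr big_ord0 /= add0r.
rewrite /cofactor !det_mx11 !mxE /= expr0 expr1 !mul1r mulN1r.
have e0 : (widen_ord (leqnSn 1) ord_max : 'I_2) = 0 by apply/val_inj.
have e1 : (lift 0 0 : 'I_2) = 1 by apply/val_inj.
have e2 : (ord_max : 'I_2) = 1 by apply/val_inj.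
have e3 : (lift ord_max 0 : 'I_2) = 0 by apply/val_inj.
rewrite e0 e3 e1 e2.

by rewrite mulrN.
Qed.

Lemma tr2 (A : 'M[R]_2) : \tr A = A 0 0 + A 1 1.
Proof.
rewrite /mxtrace !big_ord_recr big_ord0 /= add0r.
have e0 : (widen_ord (leqnSn 1) ord_max : 'I_2) = 0 by apply/val_inj.
have e2 : (ord_max : 'I_2) = 1 by apply/val_inj.
by rewrite e0 e2.
Qed.

Lemma mul2E (A B : 'M[R]_2) i j : (A *m B) i j = A i 0 * B 0 j + A i 1 * B 1 j.
Proof.
rewrite mxE !big_ord_recr big_ord0 /= add0r.
have e0 : (widen_ord (leqnSn 1) ord_max : 'I_2) = 0 by apply/val_inj.
have e2 : (ord_max : 'I_2) = 1 by apply/val_inj.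
by rewrite e0 e2.
Qed.

Lemma ord2 (i : 'I_2) : i = 0 \/ i = 1.
Proof.
case: i => [[|[|n]]] H; [left|right|]; try by apply/val_inj.
by [].
Qed.

Lemma ch2 (A : 'M[R]_2) : A *m A = \tr A *: A - \det A *: 1%:M.
Proof.
apply/matrixP => i j; rewrite mul2E !mxE det2 tr2.
have hi := ord2 i; have hj := ord2 j.
case: hi => ->; case: hj => ->; by rewrite /= ?mulr1 ?mulr0; ring.
Qed.
End TwoByTwo.

Lemma charp2 (R : comNzRingType) (A : 'M[R]_2) :
  char_poly A = 'X^2 - (\tr A)%:P * 'X + (\det A)%:P.
Proof.
apply/polyP => i.
rewrite !coefD !coefN coefXn coefCM coefX coefC.
case: i => [|[|[|i]]] /=.
- by rewrite char_poly_det; ring.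
- by rewrite (char_poly_trace A) //=; ring.
- have := char_poly_monic A; move/monicP; rewrite /lead_coef size_char_poly /= => ->.
  ring.
- by rewrite nth_default ?size_char_poly //; ring.
Qed.

Lemma hyp_crit (R : rcfType) (M : 'M[R]_2) :
  \det M != 0 -> 0 < (\tr M)^+2 * ((\tr M)^+2 - 4 * \det M) ->
  hyperbolic (normalize_P M).
Proof.
move=> d0 pos.
set t := \tr M in pos *; set d := \det M in d0 pos *.
set s := Num.sqrt `|d|.
have s0 : 0 < s by rewrite sqrtr_gt0 normr_gt0.
have ss : s ^+ 2 = `|d| by rewrite sqr_sqrtr.
have t0 : t != 0.
  apply/eqP => e; move: pos; rewrite e expr0n /= mul0r ltxx //.
have t2 : 0 < t ^+ 2 by rewrite exprn_even_gt0 //.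
have disc : 0 < t ^+ 2 - 4 * d.
  by move: pos; rewrite pmulr_rgt0.
set T := t / s.
set D := d / s ^+ 2.
set r := Num.sqrt (T ^+ 2 - 4 * D).
have Dpos : 0 < T ^+ 2 - 4 * D.
  have -> : T ^+ 2 - 4 * D = (t ^+ 2 - 4 * d) / s ^+ 2.
    by rewrite /T /D; field; rewrite gt_eqF.
  by rewrite divr_gt0 // exprn_gt0.
have r0 : 0 < r by rewrite sqrtr_gt0.
have rr : r ^+ 2 = T ^+ 2 - 4 * D by rewrite sqr_sqrtr // ltW.
have T0 : T != 0 by rewrite /T mulf_neq0 // invr_eq0 gt_eqF.
exists ((T + r) / 2), ((T - r) / 2); split.
  apply/negP => /eqP e.
  have : ((T + r) / 2) ^+ 2 = ((T - r) / 2) ^+ 2.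
    by rewrite -(real_normK (num_real _)) e real_normK ?num_real.
  move=> e2.
  have e3 : ((T + r) / 2) ^+ 2 - ((T - r) / 2) ^+ 2 = T * r by field.
  have : T * r = 0 by rewrite -e3 e2 subrr.
  by move/eqP; rewrite mulf_eq0 (negPf T0) gt_eqF.
rewrite charp2.
have -> : \tr (normalize_P M) = T.
  by rewrite /normalize_P mxtraceZ mulrC.
have -> : \det (normalize_P M) = D.
  rewrite /normalize_P detZ -/d -/s /D exprVn mulrC //.
have eD : D = (T + r) / 2 * ((T - r) / 2).
  apply: (mulfI (x := 4)); first by rewrite pnatr_eq0.
  have -> : 4 * ((T + r) / 2 * ((T - r) / 2)) = T^+2 - r ^+ 2 by field.
  rewrite rr; ring.
have eT : T = (T + r) / 2 + (T - r) / 2 by field.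
have key : forall a b : R, 'X^2 - (a + b)%:P * 'X + (a * b)%:P = ('X - a%:P) * ('X - b%:P).
  by move=> a b; rewrite polyCD polyCM; ring.
by rewrite -key -eT -eD.
Qed.

Section Bounds.
Variable R : realFieldType.

Definition bnd m n (X : 'M[R]_(m, n)) (c : R) := forall i j, `|X i j| <= c.

Lemma bnd_le m n (X : 'M[R]_(m, n)) c c' : bnd X c -> c <= c' -> bnd X c'.
Proof. by move=> h hc i j; apply: le_trans (h i j) hc. Qed.

Lemma bndD m n (X Y : 'M[R]_(m, n)) a b : bnd X a -> bnd Y b -> bnd (X + Y) (a + b).
Proof. by move=> hx hy i j; rewrite mxE (le_trans (ler_normD _ _)) // lerD. Qed.

Lemma bndN m n (X : 'M[R]_(m, n)) a : bnd X a -> bnd (- X) a.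
Proof. by move=> hx i j; rewrite mxE normrN. Qed.

Lemma bndZ m n (X : 'M[R]_(m, n)) a k : bnd X a -> `|k| <= 1 -> bnd (k *: X) a.
Proof.
move=> hx hk i j; rewrite mxE normrM.
have a0 : 0 <= a := le_trans (normr_ge0 _) (hx i j).
by rewrite -[a]mul1r ler_pM.
Qed.

Lemma bndZ' m n (X : 'M[R]_(m, n)) a k : bnd X a -> bnd (k *: X) (`|k| * a).
Proof. by move=> hx i j; rewrite mxE normrM ler_wpM2l. Qed.

Lemma bnd1 n : bnd (1%:M : 'M[R]_n) 1.
Proof. by move=> i j; rewrite mxE; case: (i == j); rewrite /= ?normr1 ?normr0. Qed.

Lemma bndM m p n (X : 'M[R]_(m, p)) (Y : 'M[R]_(p, n)) a b :
  bnd X a -> bnd Y b -> bnd (X *m Y) (p%:R * (a * b)).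
Proof.
move=> hx hy i j; rewrite mxE (le_trans (ler_norm_sum _ _ _)) //.
rewrite (le_trans (ler_sum (G := fun _ => a * b) _ _)) //.
  by move=> k _; rewrite normrM ler_pM.
by rewrite sumr_const card_ord mulr_natl.
Qed.

Lemma bnd_sum m n p (F : 'I_p -> 'M[R]_(m, n)) c :
  (forall i, bnd (F i) c) -> bnd (\sum_(i < p) F i) (p%:R * c).
Proof.
move=> h i j; rewrite summxE (le_trans (ler_norm_sum _ _ _)) //.
rewrite (le_trans (ler_sum (G := fun _ => c) _ _)) //.
  by move=> k _; apply: h.
by rewrite sumr_const card_ord mulr_natl.
Qed.

Lemma bnd_block m1 m2 n1 n2 (A : 'M[R]_(m1, n1)) (B : 'M[R]_(m1, n2))
   (C : 'M[R]_(m2, n1)) (D : 'M[R]_(m2, n2)) c :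
  bnd A c -> bnd B c -> bnd C c -> bnd D c -> bnd (block_mx A B C D) c.
Proof.
move=> hA hB hC hD i j.
rewrite -(splitK i) -(splitK j); case: (split i) => i'; case: (split j) => j' /=.
- by rewrite block_mxEul.
- by rewrite block_mxEur.
- by rewrite block_mxEdl.
- by rewrite block_mxEdr.
Qed.

Definition mxb m n (X : 'M[R]_(m, n)) : R := \sum_i \sum_j `|X i j|.

Lemma mxb_ge0 m n (X : 'M[R]_(m, n)) : 0 <= mxb X.
Proof. by apply: sumr_ge0 => i _; apply: sumr_ge0. Qed.

Lemma bnd_mxb m n (X : 'M[R]_(m, n)) : bnd X (mxb X).
Proof.
move=> i j; rewrite /mxb (bigD1 i) //= (bigD1 j) //=.
rewrite -addrA lerDl addr_ge0 //; apply: sumr_ge0 => *; first by [].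
by apply: sumr_ge0.
Qed.

Definition PB m n (f : nat -> 'M[R]_(m, n)) :=
  exists C : R, exists k : nat, 0 <= C /\ forall t, bnd (f t) (C * (t.+1)%:R ^+ k).

Lemma up_ok (C C' : R) (k k' t : nat) : 0 <= C -> C <= C' -> (k <= k')%N ->
  C * (t.+1)%:R ^+ k <= C' * (t.+1)%:R ^+ k'.
Proof.
move=> C0 CC kk; apply: ler_pM => //; first exact: exprn_ge0.
by apply: ler_weXn2l => //; rewrite ler1n.
Qed.

Lemma PB_const m n (X : 'M[R]_(m, n)) : PB (fun _ => X).
Proof. exists (mxb X), 0%N; split; first exact: mxb_ge0.
by move=> t; rewrite expr0 mulr1; apply: bnd_mxb. Qed.

Lemma PB_D m n (f g : nat -> 'M[R]_(m, n)) : PB f -> PB g -> PB (fun t => f t + g t).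
Proof.
move=> [C1 [k1 [C10 h1]]] [C2 [k2 [C20 h2]]].
exists (C1 + C2 + (C1 + C2)), (k1 + k2)%N; split; first by lra.
move=> t; apply: (bnd_le (bndD (h1 t) (h2 t))).
rewrite mulrDl; apply: lerD; apply: up_ok => //; try lra; 
  by rewrite ?leq_addr ?leq_addl.
Qed.

Lemma PB_N m n (f : nat -> 'M[R]_(m, n)) : PB f -> PB (fun t => - f t).
Proof. by move=> [C [k [C0 h]]]; exists C, k; split => // t; apply: bndN. Qed.

Lemma PB_Z m n (f : nat -> 'M[R]_(m, n)) (c : nat -> R) :
  PB f -> (forall t, `|c t| <= 1) -> PB (fun t => c t *: f t).
Proof. by move=> [C [k [C0 h]]] hc; exists C, k; split => // t; apply: bndZ. Qed.

Lemma PB_M m p n (f : nat -> 'M[R]_(m, p)) (g : nat -> 'M[R]_(p, n)) :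
  PB f -> PB g -> PB (fun t => f t *m g t).
Proof.
move=> [C1 [k1 [C10 h1]]] [C2 [k2 [C20 h2]]].
exists (p%:R * (C1 * C2)), (k1 + k2)%N; split.
  by rewrite mulr_ge0 ?mulr_ge0.
move=> t; apply: (bnd_le (bndM (h1 t) (h2 t))).
rewrite exprD; set u := _ ^+ k1; set v := _ ^+ k2.
by rewrite (_ : p%:R * (C1 * u * (C2 * v)) = p%:R * (C1 * C2) * (u * v)) //; ring.
Qed.

Lemma PB_shift m n (f : nat -> 'M[R]_(m, n)) : PB f -> PB (fun t => f t.+1).
Proof.
move=> [C [k [C0 h]]]; exists (C * 2%:R ^+ k), k; split.
  by rewrite mulr_ge0 // exprn_ge0.
move=> t; apply: (bnd_le (h t.+1)).
rewrite -mulrA; apply: ler_wpM2l => //; rewrite -exprMn.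
apply: lerXn2r; rewrite ?nnegrE ?mulr_ge0 //.
by rewrite -natrM ler_nat; lia.
Qed.

Lemma PB_block m1 m2 n1 n2 (A : nat -> 'M[R]_(m1, n1)) (B : nat -> 'M[R]_(m1, n2))
   (C : nat -> 'M[R]_(m2, n1)) (D : nat -> 'M[R]_(m2, n2)) :
  PB A -> PB B -> PB C -> PB D -> PB (fun t => block_mx (A t) (B t) (C t) (D t)).
Proof.
move=> [C1 [k1 [C10 h1]]] [C2 [k2 [C20 h2]]] [C3 [k3 [C30 h3]]] [C4 [k4 [C40 h4]]].
exists (C1 + C2 + C3 + C4), (k1 + k2 + k3 + k4)%N; split; first by lra.
move=> t; apply: bnd_block.
- apply: (bnd_le (h1 t)); apply: up_ok => //; [lra|lia].
- apply: (bnd_le (h2 t)); apply: up_ok => //; [lra|lia].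
- apply: (bnd_le (h3 t)); apply: up_ok => //; [lra|lia].
- apply: (bnd_le (h4 t)); apply: up_ok => //; [lra|lia].
Qed.

Lemma PB_sum m n (g : nat -> 'M[R]_(m, n)) (c : nat -> nat -> R) :
  PB g -> (forall t i, `|c t i| <= 1) ->
  PB (fun t => \sum_(i < t) c t i *: g i).
Proof.
move=> [C [k [C0 h]]] hc; exists C, k.+1; split => // t.
apply: (bnd_le (bnd_sum (c := C * (t.+1)%:R ^+ k) _)).
  move=> i; apply: bndZ => //; apply: (bnd_le (h i)); apply: ler_wpM2l => //.
  by apply: lerXn2r; rewrite ?nnegrE ?ler0n // ler_nat ltnS ltnW.
rewrite exprS mulrCA; apply: ler_wpM2l => //; apply: ler_wpM2r.
  by rewrite exprn_ge0.
by rewrite ler_nat.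
Qed.

Section Cheb.
Variables (tau : R) (N : 'M[R]_2).
Hypothesis hN : N *m N = tau *: N - 1%:M.
Hypothesis htau : `|tau| <= 2.

Fixpoint cheb n := match n with O => 0 | S O => 1 | S ((S m) as n') => tau * cheb n' - cheb m end.

Lemma chebS n : cheb n.+2 = tau * cheb n.+1 - cheb n. Proof. by []. Qed.

Lemma powN n : N ^+ n.+1 = cheb n.+1 *: N - cheb n *: 1%:M.
Proof.
elim: n => [|n IH]; first by rewrite expr1 /= scale1r scale0r subr0.
rewrite exprSr IH mulrBl -!scalerAl mul1r -mulmxE hN chebS.
by apply/matrixP => i j; rewrite !mxE; ring.
Qed.

Lemma cheb_inv n : cheb n.+1 ^+ 2 - tau * cheb n.+1 * cheb n + cheb n ^+ 2 = 1.
Proof.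
elim: n => [|n IH]; first by rewrite /=; ring.
by rewrite chebS -IH; ring.
Qed.

Lemma cheb_bnd n : `|cheb n| <= n%:R.
Proof.
elim: n => [|n IH]; first by rewrite normr0.
have inv := cheb_inv n.
set x := cheb n.+1 in inv *; set y := cheb n in inv IH *.
have ht : -2 <= tau <= 2 by rewrite -ler_norml.
have ht2 : tau ^+ 2 <= 4.
  by move/andP: ht => [h1 h2]; nra.
set z := x - tau / 2 * y.
have hz2 : z ^+ 2 <= 1.
  have -> : z ^+ 2 = (x ^+ 2 - tau * x * y + y ^+ 2) - (1 - tau ^+ 2 / 4) * y ^+ 2 by rewrite /z; field.
  rewrite inv.
  have : 0 <= (1 - tau ^+ 2 / 4) * y ^+ 2 by rewrite mulr_ge0 ?sqr_ge0 // subr_ge0 ler_pdivrMr //; lra.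
  lra.
have hz : -1 <= z <= 1 by apply/andP; split; nra.
have hty : `|tau * y| <= 2 * `|y| by rewrite normrM ler_wpM2r.
have hty' : -(2 * `|y|) <= tau * y <= 2 * `|y| by rewrite -ler_norml.
have hx : x = z + tau * y / 2 by rewrite /z; field.
rewrite -natr1 ler_norml; apply/andP; split;
  move/andP: hz => [? ?]; move/andP: hty' => [? ?]; rewrite hx; lra.
Qed.

Lemma PB_pow : PB (fun t => N ^+ t).
Proof.
exists (mxb N + 1), 1%N; split; first by rewrite addr_ge0 // mxb_ge0.
case => [|n].
  rewrite expr0; apply: (@bnd_le _ _ 1%:M 1); first exact: bnd1.
  by rewrite expr1 mulr1 lerDr mxb_ge0.
rewrite powN.
apply: (bnd_le (c := `|cheb n.+1| * mxb N + `|cheb n| * 1)).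
  apply: bndD; first exact: bndZ' (bnd_mxb N).
  by apply: bndN; apply: bndZ'; apply: bnd1.
rewrite expr1 mulr1.
have h1 := cheb_bnd n.+1; have h2 := cheb_bnd n.
have m0 := mxb_ge0 N.
have : `|cheb n.+1| * mxb N <= n.+1%:R * mxb N by rewrite ler_wpM2r.
rewrite -!natr1 in h1 h2 *. nra.
Qed.
End Cheb.
End Bounds.

Lemma ord3 (i : 'I_3) : i = 0 \/ i = 1 \/ i = 2.
Proof.
case: i => [[|[|[|n]]]] H; try by [left; apply/val_inj|right;left;apply/val_inj|right;right;apply/val_inj].
Qed.

Section Frame.
Variable R : realFieldType.
Variable B : 'M[R]_(3, 2).
Hypothesis hB : \rank B = 2%N.

Lemma mul3E m n (X : 'M[R]_(m, 3)) (Y : 'M[R]_(3, n)) i j :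
  (X *m Y) i j = X i 0 * Y 0 j + X i 1 * Y 1 j + X i 2 * Y 2 j.
Proof.
rewrite mxE !big_ord_recr big_ord0 /= add0r.
have e0 : (widen_ord (leqnSn 2) (widen_ord (leqnSn 1) ord_max) : 'I_3) = 0 by apply/val_inj.
have e1 : (widen_ord (leqnSn 2) ord_max : 'I_3) = 1 by apply/val_inj.
have e2 : (ord_max : 'I_3) = 2 by apply/val_inj.
by rewrite e0 e1 e2.
Qed.

Lemma leftinv : exists L : 'M[R]_(2, 3), L *m B = 1%:M.
Proof.
have : row_free B^T by rewrite /row_free mxrank_tr hB.
move/row_freeP => [C hC]; exists C^T.
by rewrite -[B]trmxK -trmx_mul hC trmx1.
Qed.

Definition ev : 'cV[R]_3 := \col_i
  (if i == 0 then B 1 0 * B 2 1 - B 2 0 * B 1 1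
   else if i == 1 then B 2 0 * B 0 1 - B 0 0 * B 2 1
   else B 0 0 * B 1 1 - B 1 0 * B 0 1).

Definition Dv : R := ev 0 0 ^+ 2 + ev 1 0 ^+ 2 + ev 2 0 ^+ 2.

Lemma Dv_neq0 : Dv != 0.
Proof.
have [L hL] := leftinv.
have h1 : \det (L *m B) = 1 by rewrite hL det1.
apply/negP => /eqP hD.
have e0 : ev 0 0 = 0 by move: hD; rewrite /Dv; nra.
have e1 : ev 1 0 = 0 by move: hD; rewrite /Dv; nra.
have e2 : ev 2 0 = 0 by move: hD; rewrite /Dv; nra.
move: e0 e1 e2 h1; rewrite !mxE /= det2 !mul3E => e0 e1 e2.
set E0 := B 1 0 * B 2 1 - B 2 0 * B 1 1 in e0 *.
set E1 := B 2 0 * B 0 1 - B 0 0 * B 2 1 in e1 *.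
set E2 := B 0 0 * B 1 1 - B 1 0 * B 0 1 in e2 *.
have -> : (L 0 0 * B 0 0 + L 0 1 * B 1 0 + L 0 2 * B 2 0) *
  (L 1 0 * B 0 1 + L 1 1 * B 1 1 + L 1 2 * B 2 1) -
  (L 0 0 * B 0 1 + L 0 1 * B 1 1 + L 0 2 * B 2 1) *
  (L 1 0 * B 0 0 + L 1 1 * B 1 0 + L 1 2 * B 2 0) =
  (L 0 0 * L 1 1 - L 0 1 * L 1 0) * E2 - (L 0 0 * L 1 2 - L 0 2 * L 1 0) * E1
  + (L 0 1 * L 1 2 - L 0 2 * L 1 1) * E0 by rewrite /E0 /E1 /E2; ring.
rewrite e0 e1 e2 !mulr0 subrr addr0 => /eqP; by rewrite eq_sym oner_eq0.
Qed.


Definition cr (u v : 'I_3 -> R) (j : 'I_3) : R :=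
  if j == 0 then u 1 * v 2 - u 2 * v 1
  else if j == 1 then u 2 * v 0 - u 0 * v 2 else u 0 * v 1 - u 1 * v 0.

Definition Q : 'M[R]_(3, 2 + 1) := row_mx B ev.
Definition Qi : 'M[R]_(2 + 1, 3) := \matrix_(i < 2 + 1, j < 3)
  ((if (i : nat) == 0%N then cr (fun k => B k 1) (fun k => ev k 0) j
   else if (i : nat) == 1%N then cr (fun k => ev k 0) (fun k => B k 0) j
   else ev j 0) / Dv).

Lemma QiQ : Qi *m Q = 1%:M.
Proof.
have hD := Dv_neq0; rewrite /Dv !mxE /= in hD.
apply/matrixP => i j; rewrite mul3E.
rewrite -(splitK j); case: (split j) => j' /=.
- rewrite /Q !row_mxEl.
  have := ord3 i; have := ord2 j'.
  by move=> [->|->] [->|[->|->]]; rewrite !mxE /= /cr /Dv !mxE /=; field.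
- rewrite /Q !row_mxEr.
  have -> : j' = 0 by apply/val_inj; case: j' => [[]].
  by have := ord3 i; move=> [->|[->|->]]; rewrite !mxE /= /cr /Dv !mxE /=; field.
Qed.
Lemma QQi : Q *m Qi = 1%:M.
Proof. exact: (mulmx1C QiQ). Qed.

Lemma QiBe : Qi *m B = col_mx 1%:M 0 /\ Qi *m ev = col_mx 0 1%:M.
Proof.
have := QiQ; rewrite /Q mul_mx_row (scalar_mx_block 2 1) block_mxEh.
by move/eq_row_mx.
Qed.

Lemma blockform (G : 'M[R]_3) (A : 'M[R]_2) : G *m B = B *m A ->
  Qi *m G *m Q = block_mx A (usubmx (Qi *m (G *m ev))) 0 (dsubmx (Qi *m (G *m ev))).
Proof.
move=> hG; rewrite /Q -mulmxA mul_mx_row hG mul_mx_row mulmxA (proj1 QiBe).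
by rewrite mul_col_mx mul1mx mul0mx block_mxEh vsubmxK.
Qed.
Lemma conjpow (G : 'M[R]_3) t : (Qi *m G *m Q) ^+ t = Qi *m G ^+ t *m Q.
Proof.
elim: t => [|t IH]; first by rewrite !expr0 mulmx1 QiQ.
rewrite exprS IH -mulmxE exprS -mulmxE !mulmxA.
by rewrite -[Qi *m G *m Q *m Qi]mulmxA QQi mulmx1.
Qed.

Lemma PB_ext m n (f g : nat -> 'M[R]_(m, n)) : (forall t, f t = g t) -> PB f -> PB g.
Proof. by move=> e [C [k [C0 h]]]; exists C, k; split => // t; rewrite -e. Qed.

Lemma pow_inv n (A A' : 'M[R]_n) t : A *m A' = 1%:M -> A ^+ t *m A' ^+ t = 1%:M.
Proof.
move=> h; elim: t => [|t IH]; first by rewrite !expr0 mulmx1.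
by rewrite exprSr exprS -!mulmxE mulmxA -[A ^+ t *m A *m A']mulmxA h mulmx1 IH.
Qed.
Lemma detblock (G : 'M[R]_3) (A : 'M[R]_2) : G *m B = B *m A -> \det G = 1 -> \det A != 0.
Proof.
move=> hG hd; have := blockform hG.
move/(congr1 determinant); rewrite det_ublock !det_mulmx hd mulr1 mulrC -det_mulmx.
rewrite (mulmx1C QiQ) det1 => e; apply/eqP => a0; move: e; rewrite a0 mul0r.
by move/eqP; rewrite oner_eq0.
Qed.

Section Growth.
Variables (G Gi H : 'M[R]_3) (s tau : R) (N X : 'M[R]_2).
Hypothesis hGi : Gi *m G = 1%:M.
Hypothesis hG : G *m B = B *m (s *: N).
Hypothesis hH : H *m B = B *m X.
Hypothesis hs0 : 0 < s.
Hypothesis hs1 : s <= 1.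
Hypothesis hN : N *m N = tau *: N - 1%:M.
Hypothesis htau : `|tau| <= 2.
Hypothesis hdN : \det N = 1.
Hypothesis hdG : \det G = 1.

Let v := usubmx (Qi *m (G *m ev)).
Let lM := dsubmx (Qi *m (G *m ev)).
Let T := Qi *m G *m Q.
Let l := (s ^+ 2)^-1.

Lemma hT : T = block_mx (s *: N) v 0 lM.
Proof. exact: blockform. Qed.

Lemma detT : \det T = 1.
Proof.
rewrite /T !det_mulmx hdG mulr1 mulrC -det_mulmx.
by rewrite (mulmx1C QiQ) det1.
Qed.

Lemma hl : lM = l%:M.
Proof.
have := detT; rewrite hT det_ublock detZ hdN mulr1 det_mx11 => e.
rewrite [lM]mx11_scalar /l; congr (_ %:M).
have s2 : s ^+ 2 != 0 by rewrite expf_neq0 // gt_eqF.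
by apply: (mulfI s2); rewrite e mulfV.
Qed.
Definition uu t : 'cV[R]_2 := \sum_(i < t) (s ^+ i * (s ^+ 2) ^+ i.+1) *: (N ^+ i *m v).

Lemma Tpow t : T ^+ t = block_mx (s ^+ t *: N ^+ t) (l ^+ t *: uu t) 0 ((l ^+ t)%:M).
Proof.
elim: t => [|t IH].
  by rewrite !expr0 scale1r /uu big_ord0 scaler0 -scalar_mx_block.
rewrite exprSr IH.
have -> : forall A : 'M[R]_(2+1), A * T = A *m T by [].
rewrite hT hl mulmx_block.
rewrite !mulmx0 !mul0mx !addr0 !add0r mul_mx_scalar -scalar_mxM.
congr block_mx.
- rewrite -scalemxAl -scalemxAr scalerA; congr (_ *: _); first by rewrite exprSr.
  by rewrite exprSr.
- rewrite /uu big_ord_recr /= scalerDr scalerA -exprS [RHS]addrC; congr (_ + _).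
  rewrite -scalemxAl scalerA; congr (_ *: _).
  have s2 : (s ^+ 2) ^+ t.+1 != 0 by rewrite !expf_neq0 // gt_eqF.
  by rewrite /l exprVn mulrCA mulVf ?mulr1.
- by rewrite -exprSr.
Qed.

Let N' := tau *: 1%:M - N.

Lemma NN' : N *m N' = 1%:M.
Proof. by rewrite /N' mulmxBr -scalemxAr mulmx1 hN opprB addrC subrK. Qed.

Lemma N'N : N' *m N = 1%:M.
Proof. by rewrite /N' mulmxBl -scalemxAl mul1mx hN opprB addrC subrK. Qed.

Lemma hN' : N' *m N' = tau *: N' - 1%:M.
Proof. by rewrite {1}/N' mulmxBl -scalemxAl mul1mx NN'. Qed.

Let Ti := Qi *m Gi *m Q.

Lemma TiT : Ti *m T = 1%:M.
Proof.
rewrite /Ti /T !mulmxA -[Qi *m Gi *m Q *m Qi]mulmxA QQi mulmx1.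
by rewrite -[Qi *m Gi *m G]mulmxA hGi mulmx1 QiQ.
Qed.

Definition YY t := block_mx ((s^-1) ^+ t *: N' ^+ t) (- ((s^-1) ^+ t *: (N' ^+ t *m uu t))) 0 (((l^-1) ^+ t)%:M).

Lemma sinv t : s ^+ t * (s^-1) ^+ t = 1.
Proof. by rewrite exprVn mulfV // expf_neq0 // gt_eqF. Qed.

Lemma linv t : l ^+ t * (l^-1) ^+ t = 1.
Proof. by rewrite exprVn mulfV // expf_neq0 // /l invr_eq0 expf_neq0 // gt_eqF. Qed.

Lemma TY t : T ^+ t *m YY t = 1%:M.
Proof.
rewrite Tpow /YY mulmx_block !mulmx0 !mul0mx !addr0 !add0r.
rewrite (scalar_mx_block 2 1) -scalar_mxM linv.
congr block_mx.
- by rewrite -scalemxAl -scalemxAr scalerA sinv scale1r pow_inv // NN'.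
- rewrite mulmxN -scalemxAl -scalemxAr scalerA sinv scale1r mulmxA pow_inv ?NN' //.
  by rewrite mul1mx mul_mx_scalar scalerA mulrC linv scale1r addNr.
Qed.

Lemma Tipow t : Ti ^+ t = YY t.
Proof.
rewrite -[Ti ^+ t]mulmx1 -(TY t) mulmxA.
by rewrite (pow_inv t TiT) mul1mx.
Qed.

Let y := usubmx (Qi *m (H *m ev)).
Let mM := dsubmx (Qi *m (H *m ev)).

Lemma Pform t : T ^+ t *m (Qi *m H *m Q) *m Ti ^+ t =
  block_mx (N ^+ t *m X *m N' ^+ t)
    (- (N ^+ t *m X *m N' ^+ t *m uu t) + (s ^+ t * (l^-1) ^+ t) *: (N ^+ t *m y) + uu t *m mM)
    0 mM.
Proof.
rewrite Tpow Tipow (blockform hH) /YY !mulmx_block !mulmx0 !mul0mx !addr0 !add0r.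
have linv' : (l^-1) ^+ t * l ^+ t = 1 by rewrite mulrC linv.
congr block_mx.
- by rewrite -!scalemxAl -scalemxAr scalerA sinv scale1r.
- rewrite mulmxN -!scalemxAl -scalemxAr scalerA sinv scale1r.
  rewrite [_ *m (N' ^+ t *m uu t)]mulmxA.
  rewrite mul_mx_scalar scalerDr !scalerA linv' scale1r addrA.
  by rewrite [(l^-1) ^+ t * _]mulrC.
- by rewrite mul0mx.
- by rewrite mul0mx add0r mul_scalar_mx mul_mx_scalar scalerA linv' scale1r.
Qed.

Lemma PB_uu : PB (fun t => uu t).
Proof.
apply: (PB_sum (g := fun i => N ^+ i *m v) (c := fun _ i => s ^+ i * (s ^+ 2) ^+ i.+1)).
  exact: PB_M (PB_pow hN htau) (PB_const v).
move=> t i.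
have s0 : 0 <= s by apply: ltW.
have s2 : 0 <= s ^+ 2 by apply: exprn_ge0.
have s21 : s ^+ 2 <= 1 by apply: exprn_ile1.
rewrite ger0_norm; last by rewrite mulr_ge0 // exprn_ge0.
by rewrite mulr_ile1 ?exprn_ge0 // exprn_ile1.
Qed.

Lemma growth : PB (fun t => G ^+ t *m H *m Gi ^+ t).
Proof.
have QK : forall Z : 'M[R]_(3, 3), Q *m (Qi *m Z) = Z.
  by move=> Z; rewrite mulmxA QQi mul1mx.
apply: (PB_ext (f := fun t => Q *m (T ^+ t *m (Qi *m H *m Q) *m Ti ^+ t) *m Qi)).
  move=> t; rewrite /T /Ti !conjpow -!mulmxA !QK.
  by rewrite QQi mulmx1.
apply: PB_M; last exact: PB_const.
apply: PB_M; first exact: PB_const.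
apply: (PB_ext (f := fun t => block_mx (N ^+ t *m X *m N' ^+ t)
    (- (N ^+ t *m X *m N' ^+ t *m uu t) + (s ^+ t * (l^-1) ^+ t) *: (N ^+ t *m y) + uu t *m mM)
    0 mM)).
  by move=> t; rewrite Pform.
have PN := PB_pow hN htau.
have PN' := PB_pow hN' htau.
have P1 : PB (fun t => N ^+ t *m X *m N' ^+ t).
  exact: PB_M (PB_M PN (PB_const X)) PN'.
apply: PB_block.
- exact: P1.
- apply: PB_D; last exact: PB_M PB_uu (PB_const mM).
  apply: PB_D; first exact: PB_N (PB_M P1 PB_uu).
  apply: PB_Z; first exact: PB_M PN (PB_const y).
  move=> t; rewrite /l invrK.
  have s0 : 0 <= s by apply: ltW.
  have s2 : 0 <= s ^+ 2 by apply: exprn_ge0.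
  have s21 : s ^+ 2 <= 1 by apply: exprn_ile1.
  rewrite ger0_norm; last by rewrite mulr_ge0 // exprn_ge0.
  by rewrite mulr_ile1 ?exprn_ge0 // exprn_ile1.
- exact: PB_const.
- exact: PB_const.
Qed.
End Growth.
End Frame.

Section Words.
Variable k : nat.
Implicit Types (a b c : word k) (x y : letter k).

Definition rr (x y : letter k) : bool := ~~ ((x.1 == y.1) && (x.2 != y.2)).
Definition flip (x : letter k) : letter k := (x.1, ~~ x.2).
Definition winv (w : word k) : word k := rev (map flip w).
Definition pw (c : word k) n : word k := flatten (nseq n c).
Definition lasto (s : word k) := ohead (rev s).

Lemma flipK : involutive flip.
Proof. by case=> i b; rewrite /flip /= negbK. Qed.

Lemma rr_sym x y : rr x y = rr y x.
Proof. by rewrite /rr; case: x => i a; case: y => j b /=; rewrite eq_sym; case: a; case: b. Qed.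

Lemma rr_flip x y : rr (flip x) (flip y) = rr x y.
Proof. by case: x => i a; case: y => j b; rewrite /rr /=; case: a; case: b. Qed.

Lemma rr_refl x : rr x x.
Proof. by rewrite /rr !eqxx. Qed.

Lemma winvK : involutive winv.
Proof. by move=> w; rewrite /winv map_rev revK -map_comp (eq_map flipK) map_id. Qed.

Lemma winv_cat a b : winv (a ++ b) = winv b ++ winv a.
Proof. by rewrite /winv map_cat rev_cat. Qed.

Lemma winv_cons x a : winv (x :: a) = winv a ++ [:: flip x].
Proof. by rewrite /winv /= rev_cons cats1. Qed.

Lemma red_cat a b x y : reduced (x :: a ++ y :: b) =
  [&& reduced (x :: a), rr (last x a) y & reduced (y :: b)].
Proof. by rewrite /reduced /= cat_path /=. Qed.

Lemma junction a b : reduced a -> reduced b ->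
  (forall x y, lasto a = Some x -> ohead b = Some y -> rr x y) -> reduced (a ++ b).
Proof.
case: a => [|x a]; first by [].
case: b => [|y b]; first by rewrite cats0.
move=> ha hb hj; rewrite red_cat ha hb andbT /=.
apply: hj; last by [].
rewrite /lasto rev_cons.
by case/lastP: a {ha} => [|a z] //=; rewrite last_rcons rev_rcons.
Qed.

Lemma lasto_cons x a : lasto (x :: a) = Some (last x a).
Proof. by rewrite /lasto rev_cons; case/lastP: a => [|a z] //=; rewrite last_rcons rev_rcons. Qed.

Lemma red_catE a b : reduced (a ++ b) -> [/\ reduced a, reduced b &
  (forall x y, lasto a = Some x -> ohead b = Some y -> rr x y)].
Proof.
case: a => [|x a]; first by [].
case: b => [|y b]; first by rewrite cats0.
rewrite red_cat => /and3P [h1 h2 h3]; split => //.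
by move=> x' y'; rewrite lasto_cons => -[<-] [<-].
Qed.

Lemma ohead_cat a b : ohead (a ++ b) = if a is [::] then ohead b else ohead a.
Proof. by case: a. Qed.

Lemma lasto_cat a b : lasto (a ++ b) = if b is [::] then lasto a else lasto b.
Proof. rewrite /lasto rev_cat; case: b => [|y b] /=; first by []. by rewrite rev_cons; case: (rev b). Qed.

Lemma ohead_map (f : letter k -> letter k) a : ohead (map f a) = omap f (ohead a).
Proof. by case: a. Qed.

Lemma ohead_winv a : ohead (winv a) = omap flip (lasto a).
Proof. by rewrite /winv /lasto -map_rev ohead_map. Qed.

Lemma lasto_winv a : lasto (winv a) = omap flip (ohead a).
Proof. by rewrite /winv /lasto revK ohead_map. Qed.

Lemma red_winv a : reduced a -> reduced (winv a).
Proof.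
rewrite /reduced /winv rev_sorted sorted_map.
have e : (fun z x => relpre flip rr x z) =2 rr.
  by move=> x y; rewrite /relpre /= rr_flip rr_sym.
by case: a => [|x a] //=; rewrite (eq_path e).
Qed.

Lemma pwS c n : pw c n.+1 = c ++ pw c n. Proof. by []. Qed.

Lemma ohead_pw c n : ohead (pw c n.+1) = ohead c.
Proof. rewrite pwS ohead_cat; case: c => [|x c] //; by elim: n. Qed.

Lemma lasto_pw c n : c != [::] -> lasto (pw c n.+1) = lasto c.
Proof.
move=> c0; elim: n => [|n IH]; first by rewrite pwS /pw /= cats0.
by rewrite pwS lasto_cat; move: IH; case: (pw c n.+1).
Qed.

Definition cyc (c : word k) := forall x y, lasto c = Some x -> ohead c = Some y -> rr x y.

Lemma red_pw c n : reduced c -> c != [::] -> cyc c -> reduced (pw c n).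
Proof.
move=> hc c0 cy; elim: n => [|n IH]; first by [].
rewrite pwS; apply: junction => // x y hx.
by case: n {IH} => [|n] //; rewrite ohead_pw; apply: cy.
Qed.

Lemma cyc_winv c : cyc c -> cyc (winv c).
Proof.
move=> cy x y; rewrite lasto_winv ohead_winv.
case e1 : (ohead c) => [a|] //= [<-]; case e2 : (lasto c) => [b|] //= [<-].
by rewrite rr_flip rr_sym; apply: cy.
Qed.

Lemma size_pw c n : size (pw c n) = (size c * n)%N.
Proof. elim: n => [|n IH]; first by rewrite muln0. by rewrite pwS size_cat IH mulnS. Qed.

Lemma cycdec (w : word k) : reduced w -> w != [::] ->
  exists u c, [/\ w = u ++ c ++ winv u, c != [::] & cyc c].
Proof.
have H : forall n (w : word k), (size w < n)%N -> reduced w -> w != [::] ->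
  exists u c, [/\ w = u ++ c ++ winv u, c != [::] & cyc c]; last by apply: H.
elim=> [|n IH] // [|x w'] // hs hw _.
case/lastP: w' hs hw => [|m y] hs hw.
  exists [::], [:: x]; split => //.
  by move=> a b; rewrite lasto_cons => -[<-] [<-]; apply: rr_refl.
case hyx : (rr y x).
  exists [::], (x :: rcons m y); split => //=; first by rewrite cats0.
  by move=> a b; rewrite lasto_cons last_rcons => -[<-] [<-].
have ey : y = flip x.
  move: hyx; rewrite /rr => /negbFE /andP [/eqP h1 h2].
  rewrite [y]surjective_pairing /flip h1; congr pair.
  by move: h2; case: (y.2); case: (x.2).
have hm : reduced m.
  by move: hw; rewrite -cats1 -cat1s => /red_catE [_ /red_catE [] ].
have m0 : m != [::].
  apply/eqP => m0; move: hw; rewrite m0 /reduced /= andbT => h.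
  by move: hyx; rewrite rr_sym /rr h.
have [u [c [e1 c0 cy]]] : exists u c, [/\ m = u ++ c ++ winv u, c != [::] & cyc c].
  apply: IH => //; move: hs; rewrite /= size_rcons; lia.
exists (x :: u), c; split => //.
by rewrite winv_cons ey e1 -cats1 /= !catA.
Qed.

Lemma zfamily (u c : word k) : (1 < k)%N -> reduced (u ++ c ++ winv u) -> c != [::] -> cyc c ->
  exists e : letter k, forall t : nat,
    reduced (u ++ pw c t.+1 ++ [:: e] ++ pw (winv c) t.+1 ++ winv u) /\
    (t <= size (u ++ pw c t.+1 ++ [:: e] ++ pw (winv c) t.+1 ++ winv u))%N.
Proof.
move=> k1 hw c0 cy.
case/red_catE: hw => hu /red_catE [hc hwu J2] J1.
have [lx hlx] : exists lx, lasto c = Some lx.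
  by case/lastP: c c0 {cy hc J2 J1} => [|c z] // _; exists z; rewrite /lasto rev_rcons.
have [hx hhx] : exists hx, ohead c = Some hx by case: c c0 {cy hc J2 J1 hlx} => [|z c] // _; exists z.
pose i0 : 'I_k := Ordinal (ltn_trans (ltnSn 0) k1).
pose i1 : 'I_k := Ordinal k1.
pose e : letter k := (if lx.1 == i0 then i1 else i0, true).
have hne : e.1 != lx.1.
  rewrite /e /=; case: ifP => [/eqP -> | /negbT h]; last by rewrite eq_sym.
  by apply/eqP => /(congr1 val).
have r1 : rr lx e by rewrite /rr eq_sym (negPf hne).
have r2 : rr e (flip lx) by rewrite /rr /= (negPf hne).
have cne : winv c != [::].
  by apply: contra c0 => /eqP h; apply/eqP; rewrite -(winvK c) h.
have pne : forall (d : word k) n, d != [::] -> pw d n.+1 != [::].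
  by move=> d n; rewrite pwS; case: d.
have ohc : forall (a b : word k), a != [::] -> ohead (a ++ b) = ohead a by move=> [|? ?].
have J1' : forall lu, lasto u = Some lu -> rr lu hx.
  move=> lu h; apply: J1 => //; rewrite ohc //.
exists e => t; split.
- apply: junction => //.
    apply: junction; first exact: red_pw.
      apply: junction => //.
        apply: junction.
        + by apply: red_pw; [exact: red_winv| |exact: cyc_winv].
        + exact: red_winv.
        + move=> a b; rewrite lasto_pw // lasto_winv hhx /= => -[<-].
          rewrite ohead_winv; case e3 : (lasto u) => [lu|] //= [<-].
          by rewrite rr_flip rr_sym; apply: J1'.
      move=> a b [<-]; rewrite ohc ?pne // ohead_pw ohead_winv hlx /= => -[<-].
      exact: r2.
    move=> a b; rewrite lasto_pw // hlx => -[<-] [<-]; exact: r1.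
  move=> a b ha; rewrite ohc ?pne // ohead_pw hhx => -[<-]; exact: J1'.
- rewrite !size_cat size_pw; move: c0; case: c {cy hc J2 J1 hlx hhx cne J1'} => [|z c] // _ /=.
  lia.
Qed.
End Words.

Section Rep.
Variables (R : realType) (k : nat) (g : 'I_k -> 'M[R]_3).
Hypothesis hg : forall i, \det (g i) = 1.

Lemma rep_nil : rep g [::] = 1%:M.
Proof. by rewrite /rep big_nil. Qed.

Lemma rep_cat a b : rep g (a ++ b) = rep g a *m rep g b.
Proof. by rewrite /rep big_cat mulmxE. Qed.

Lemma rep_cons x a : rep g (x :: a) = letter_mx g x *m rep g a.
Proof. by rewrite /rep big_cons mulmxE. Qed.

Lemma rep1 x : rep g [:: x] = letter_mx g x.
Proof. by rewrite rep_cons rep_nil mulmx1. Qed.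

Lemma gunit i : g i \in unitmx.
Proof. by rewrite unitmxE hg unitr1. Qed.

Lemma letter_flip x : letter_mx g x *m letter_mx g (flip x) = 1%:M.
Proof.
case: x => i b; rewrite /letter_mx /flip /=.
by case: b => /=; [rewrite mulmxV ?gunit | rewrite mulVmx ?gunit].
Qed.

Lemma rep_winvR a : rep g a *m rep g (winv a) = 1%:M.
Proof.
elim: a => [|x a IH]; first by rewrite /winv /= rep_nil mulmx1.
rewrite winv_cons rep_cat rep_cons rep1 mulmxA -[_ *m rep g a *m _]mulmxA IH mulmx1.
exact: letter_flip.
Qed.

Lemma rep_winvL a : rep g (winv a) *m rep g a = 1%:M.
Proof. exact: (mulmx1C (rep_winvR a)). Qed.

Lemma rep_pw c n : rep g (pw c n) = rep g c ^+ n.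
Proof.
elim: n => [|n IH]; first by rewrite expr0 /pw /= rep_nil.
by rewrite pwS rep_cat IH exprS mulmxE.
Qed.

Lemma rep_det a : \det (rep g a) = 1.
Proof.
elim: a => [|x a IH]; first by rewrite rep_nil det1.
rewrite rep_cons det_mulmx IH mulr1 /letter_mx.
by case: (x.2); rewrite ?det_inv hg ?invr1.
Qed.
End Rep.

Lemma conjpow3 (R : realFieldType) (U Ui Z : 'M[R]_3) n : Ui *m U = 1%:M ->
  (U *m Z *m Ui) ^+ n = U *m Z ^+ n *m Ui.
Proof.
move=> h; elim: n => [|n IH].
  by rewrite !expr0 mulmx1 (mulmx1C h).
rewrite exprS IH -mulmxE exprS -mulmxE !mulmxA.
by rewrite -[U *m Z *m Ui *m U]mulmxA h mulmx1.
Qed.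

Lemma mxnorm_le (R : realFieldType) (A : 'M[R]_3) c : 0 <= c -> bnd A c -> mxnorm A <= c.
Proof.
move=> c0 h; rewrite /mxnorm.
have hmax : forall x y : R, x <= c -> y <= c -> Num.max x y <= c.
  by move=> x y hx hy; rewrite ge_max hx hy.
apply: (big_ind (fun x => x <= c)); [exact: c0| exact: hmax| move=> i _].
apply: (big_ind (fun x => x <= c)); [exact: c0| exact: hmax| move=> j _].
exact: h.
Qed.

Lemma noPB (R : realType) (f : nat -> 'M[R]_3) (a b : R) : 0 < a ->
  (forall t, t%:R / a - b <= ln (mxnorm (f t))) -> PB f -> False.
Proof.
move=> a0 hq [C [K [C0 hC]]].
set C1 := C + 1.
have C10 : 0 < C1 by rewrite /C1; lra.
set eps := (2 * a * (K.+1)%:R)^-1.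
have eps0 : 0 < eps by rewrite invr_gt0 !mulr_gt0 // ltr0n.
have hlt : forall t : nat, ln (t.+1)%:R <= eps * t.+1%:R - 1 - ln eps.
  move=> t.
  have p1 : 0 < eps * t.+1%:R by rewrite mulr_gt0 // ltr0n.
  have : ln (1 + (eps * t.+1%:R - 1)) <= eps * t.+1%:R - 1 by apply: le_ln1Dx; lra.
  rewrite addrC subrK lnM ?posrE // ?ltr0n //.
  lra.
have key : forall t : nat, t%:R / a - b <= ln C1 + K%:R * (eps * t.+1%:R - 1 - ln eps).
  move=> t; apply: (le_trans (hq t)).
  have hb : mxnorm (f t) <= C1 * (t.+1)%:R ^+ K.
    apply: mxnorm_le; first by rewrite mulr_ge0 ?exprn_ge0 ?ler0n // ltW.
    apply: (bnd_le (hC t)); apply: ler_wpM2r; first by rewrite exprn_ge0.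
    by rewrite /C1; lra.
  have pK : 0 < C1 * (t.+1)%:R ^+ K by rewrite mulr_gt0 // exprn_gt0 // ltr0n.
  have e1 : ln (C1 * (t.+1)%:R ^+ K) = ln C1 + K%:R * ln (t.+1)%:R.
    by rewrite lnM ?posrE ?exprn_gt0 ?ltr0n // lnXn ?ltr0n // mulr_natl.
  have step : ln (mxnorm (f t)) <= ln (C1 * (t.+1)%:R ^+ K).
    case: (lerP (mxnorm (f t)) 0) => hm.
      rewrite ln0 // e1.
      have : 0 <= ln C1 + K%:R * ln (t.+1)%:R.
        rewrite -e1 ln_ge0 //.
        have : 1 <= C1 by rewrite /C1; lra.
        move=> h1.
        have h2 : 1 <= (t.+1)%:R ^+ K :> R by rewrite exprn_ege1 // ler1n.
        have : 1 * 1 <= C1 * (t.+1)%:R ^+ K by apply: ler_pM.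
        by rewrite mulr1.
      by [].
    by rewrite ler_ln ?posrE.
  apply: (le_trans step); rewrite e1 lerD2l; apply: ler_wpM2l; first by rewrite ler0n.
  exact: hlt.
set L := ln eps.
have hK : K%:R * eps <= (2 * a)^-1.
  have -> : K%:R * eps = (2 * a)^-1 * (K%:R / (K.+1)%:R).
    have hK1 : 1 + K%:R != 0 :> R by rewrite addrC natr1 pnatr_eq0.
    by rewrite /eps; field; rewrite hK1 gt_eqF.
  rewrite -[X in _ <= X]mulr1 ler_wpM2l ?invr_ge0 ?mulr_ge0 ?ltW //.
  by rewrite ltr_pdivrMr ?ltr0n // mul1r ltr_nat.
set Cst := ln C1 + K%:R * (eps - 1 - L) + b.
have [n hn] : exists n : nat, 2 * a * (`|Cst| + 1) < n%:R.
  exists (Num.Def.archi_bound (2 * a * (`|Cst| + 1))).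
  by apply: archi_boundP; rewrite mulr_ge0 ?addr_ge0 // mulr_ge0 // ltW.
have := key n.
have e2 : K%:R * (eps * n.+1%:R - 1 - L) = (K%:R * eps) * n%:R + K%:R * (eps - 1 - L).
  by rewrite -natr1; ring.
rewrite e2.
have hn' : (K%:R * eps) * n%:R <= (2 * a)^-1 * n%:R by rewrite ler_wpM2r ?ler0n.
have ha : n%:R / a = 2 * ((2 * a)^-1 * n%:R) by field; rewrite gt_eqF.
have hc : `|Cst| + 1 < (2 * a)^-1 * n%:R.
  by rewrite mulrC ltr_pdivlMr ?mulr_gt0 // mulrC.
have : Cst <= `|Cst| by apply: ler_norm.
rewrite ha /Cst; lra.
Qed.

Lemma finish (R : realType) (k : nat) (g : 'I_k -> 'M[R]_3) (B : 'M[R]_(3, 2)) (a b : R)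
  (u c : word k) (G Gi : 'M[R]_3) (s tau : R) (N : 'M[R]_2) :
  (1 < k)%N -> (forall i, \det (g i) = 1) -> \rank B = 2%N ->
  (forall w : word k, reduced w -> exists M : 'M[R]_2, rep g w *m B = B *m M) ->
  1 <= a -> (forall w : word k, reduced w -> a^-1 * (wlen w)%:R - b <= ln (mxnorm (rep g w))) ->
  reduced (u ++ c ++ winv u) -> c != [::] -> cyc c ->
  G = rep g u *m rep g c ^+ 2 *m rep g (winv u) ->
  Gi = rep g u *m rep g (winv c) ^+ 2 *m rep g (winv u) ->
  G *m B = B *m (s *: N) -> 0 < s -> s <= 1 -> N *m N = tau *: N - 1%:M ->
  `|tau| <= 2 -> \det N = 1 -> False.
Proof.
move=> k1 hg hB hinv a1 hq hw c0 cy eG eGi hG s0 s1 hN ht hdN.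
have [e he] := zfamily k1 hw c0 cy.
have hu : reduced u by case/red_catE: hw.
have hwu : reduced (winv u) by case/red_catE: hw => _ /red_catE [].
have [Mu hMu] := hinv u hu.
have [Me hMe] := hinv [:: e] (erefl true).
have [Mi hMi] := hinv _ hwu.
set ru := rep g u; set rui := rep g (winv u); set re := rep g [:: e].
set rc := rep g c; set rci := rep g (winv c).
have K1 : rui *m ru = 1%:M by apply: rep_winvL.
have KK : forall Z : 'M[R]_(3, 3), rui *m (ru *m Z) = Z by move=> Z; rewrite mulmxA K1 mul1mx.
set H := ru *m re *m rui.
have hH : H *m B = B *m (Mu *m Me *m Mi).
  rewrite /H -!mulmxA hMi (mulmxA re) hMe -mulmxA (mulmxA ru) hMu.
  by rewrite !mulmxA.
have K2 : rci ^+ 2 *m rc ^+ 2 = 1%:M by apply: pow_inv; apply: rep_winvL.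
have hGi : Gi *m G = 1%:M.
  rewrite eGi eG -/ru -/rui -/rc -/rci.
  set P2 := rc ^+ 2 in K2 *; set Q2 := rci ^+ 2 in K2 *.
  have KY : forall Z : 'M[R]_(3, 3), rci *m (rc *m Z) = Z.
    by move=> Z; rewrite mulmxA rep_winvL // mul1mx.
  by rewrite -!mulmxA KK !KY (mulmx1C K1).
have hdG : \det G = 1.
  rewrite eG !det_mulmx; rewrite ?(rep_det hg) ?mulr1 //.
have gr := growth hB hGi hG hH s0 s1 hN ht hdN hdG.
have gr1 := PB_shift gr.
pose z t := u ++ pw c (2 * t).+2 ++ [:: e] ++ pw (winv c) (2 * t).+2 ++ winv u.
apply: (noPB (f := fun t => rep g (z t)) (a := a) (b := b)).
- lra.
- move=> t; have [hr hs] := he (2 * t).+1.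
  apply: le_trans (hq _ hr).
  rewrite lerD2r mulrC ler_wpM2l ?invr_ge0 ?ler_nat //; first by lra.
  rewrite /wlen; apply: leq_trans hs; lia.
- apply: (PB_ext _ gr1) => t.
  have e2 : (2 * t).+2 = (2 * t.+1)%N by lia.
  have ez : rep g (z t) = ru *m (rc ^+ (2 * t.+1) *m (re *m (rci ^+ (2 * t.+1) *m rui))).
    rewrite /z e2 rep_cat (rep_cat g (pw c _)) (rep_cat g [:: e]) (rep_cat g (pw (winv c) _)).
    by rewrite !rep_pw.
  rewrite ez eG eGi !conjpow3 // -/ru -/rui -/rc -/rci !exprM.
  set P := rc ^+ 2 ^+ t.+1; set Q := rci ^+ 2 ^+ t.+1.
  by rewrite /H -!mulmxA !KK.
Qed.

Unset Implicit Arguments.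
Theorem mainTheorem14 (R : realType) (k : nat) (g : 'I_k -> 'M[R]_3)
  (B : 'M[R]_(3, 2)) :
  (2 <= k)%N ->
  (forall i, \det (g i) = 1) ->
  \rank B = 2%N ->
  (forall w : word k, reduced w ->
     exists M : 'M[R]_2, rep g w *m B = B *m M) ->
  (exists a b : R, 1 <= a /\ 0 <= b /\
     forall w : word k, reduced w ->
       a^-1 * (wlen w)%:R - b <= ln (mxnorm (rep g w))) ->
  forall w : word k, reduced w -> w != [::] ->
  forall M : 'M[R]_2, rep g w *m B = B *m M ->
    hyperbolic (normalize_P M).
Proof.
move=> k1 hg hB hinv [a [b [a1 [b0 hq]]]] w hw w0 M hM.
have [u [c [ew c0 cy]]] := cycdec hw w0.
have hdw := rep_det hg w.
have d0 : \det M != 0 := detblock hB hM hdw.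
case: (ltrP 0 ((\tr M) ^+ 2 * ((\tr M) ^+ 2 - 4 * \det M))) => hpos; first exact: hyp_crit.
exfalso.
have chM := ch2 M.
set t := \tr M in hpos chM; set d := \det M in d0 hpos chM.
set s := `|d|.
have s0 : 0 < s by rewrite normr_gt0.
have ss : s ^+ 2 = d ^+ 2 by rewrite real_normK ?num_real.
set A2 := M *m M.
set N := s^-1 *: A2.
have hA2 : A2 = s *: N by rewrite /N scalerA mulfV ?gt_eqF // scale1r.
have trA2 : \tr A2 = t ^+ 2 - 2 * d.
  rewrite /A2 chM raddfB /= !mxtraceZ mxtrace1 -/t; ring.
have detA2 : \det A2 = d ^+ 2 by rewrite /A2 det_mulmx expr2.
have d2 : 0 < d ^+ 2 by rewrite exprn_even_gt0.
have hdN : \det N = 1.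
  by rewrite /N detZ detA2 -ss exprVn mulVf // expf_neq0 // gt_eqF.
set tau := \tr N.
have hN : N *m N = tau *: N - 1%:M by rewrite ch2 hdN scale1r.
have etau : tau = s^-1 * (t ^+ 2 - 2 * d) by rewrite /tau /N mxtraceZ trA2.
have htau2 : tau ^+ 2 <= 4.
  rewrite etau exprMn exprVn ss mulrC ler_pdivrMr //.
  have : (t ^+ 2 - 2 * d) ^+ 2 - 4 * d ^+ 2 = t ^+ 2 * (t ^+ 2 - 4 * d) by ring.
  lra.
have ht : `|tau| <= 2.
  rewrite ler_norml; apply/andP; split; nra.
set ru := rep g u; set rui := rep g (winv u).
set rc := rep g c; set rci := rep g (winv c).
have K1 : rui *m ru = 1%:M by apply: rep_winvL.
have KK : forall Z : 'M[R]_(3, 3), rui *m (ru *m Z) = Z by move=> Z; rewrite mulmxA K1 mul1mx.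
have KY : forall Z : 'M[R]_(3, 3), rci *m (rc *m Z) = Z.
  by move=> Z; rewrite mulmxA rep_winvL // mul1mx.
have KY' : forall Z : 'M[R]_(3, 3), rc *m (rci *m Z) = Z.
  by move=> Z; rewrite mulmxA rep_winvR // mul1mx.
have ew' : rep g w = ru *m (rc *m rui) by rewrite ew !rep_cat.
set G := ru *m rc ^+ 2 *m rui.
set Gi := ru *m rci ^+ 2 *m rui.
have eG : G = rep g w *m rep g w.
  by rewrite ew' /G -!mulmxA KK.
have hG : G *m B = B *m (s *: N).
  by rewrite eG -mulmxA hM mulmxA hM -mulmxA -/A2 hA2.
have hGi : Gi *m G = 1%:M by rewrite /Gi /G -!mulmxA KK !KY (mulmx1C K1).
have hw' : reduced (u ++ c ++ winv u) by rewrite -ew.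
case: (lerP s 1) => hs1.
  by apply: (finish k1 hg hB hinv a1 hq hw' c0 cy (erefl G) (erefl Gi) hG s0 hs1 hN ht hdN).
set N' := tau *: 1%:M - N.
have NN' : N *m N' = 1%:M by rewrite /N' mulmxBr -scalemxAr mulmx1 hN opprB addrC subrK.
have hN' : N' *m N' = tau *: N' - 1%:M.
  by rewrite {1}/N' mulmxBl -scalemxAl mul1mx NN'.
have hdN' : \det N' = 1.
  by have := congr1 determinant NN'; rewrite det_mulmx hdN mul1r det1.
have hGiB : Gi *m B = B *m (s^-1 *: N').
  have e1 : (s *: N) *m (s^-1 *: N') = 1%:M.
    by rewrite -scalemxAl -scalemxAr scalerA mulfV ?gt_eqF // scale1r NN'.
  by rewrite -[B in LHS]mulmx1 -e1 (mulmxA B) -hG (mulmxA Gi) (mulmxA Gi) hGi mul1mx.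
have hw'' : reduced (u ++ winv c ++ winv u).
  by have := red_winv hw'; rewrite !winv_cat winvK catA.
have c0' : winv c != [::].
  by apply: contra c0 => /eqP h; apply/eqP; rewrite -(winvK c) h.
have eG' : G = ru *m rep g (winv (winv c)) ^+ 2 *m rui by rewrite winvK.
apply: (finish k1 hg hB hinv a1 hq hw'' c0' (cyc_winv cy) (erefl Gi) eG' hGiB _ _ hN' ht hdN').
  by rewrite invr_gt0.
by rewrite invf_le1 // ltW.
Qed.
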